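(* Let $m\ge 2$ and let $Q_2$ be a bivariate quasi-copula. Then $Q^*(u):=Q_2(\min_{2\le i\le m}u_i,\,u_1)$, $u=(u_1,\dots,u_m)\in[0,1]^m$, is an $m$-variate quasi-copula, and its survival function satisfies $$\widehat{Q^*}(u_1,\dots,u_m)=\widehat{Q_2}\big(\max_{2\le i\le m}u_i,\,u_1\big)\quad\text{for all }(u_1,\dots,u_m)\in[0,1]^m.$$
   Context: An $m$-variate quasi-copula is $Q:[0,1]^m\to[0,1]$ that is grounded ($Q(u)=0$ whenever some $u_i=0$), has uniform marginals ($Q(1,\dots,1,u_i,1,\dots,1)=u_i$), is nondecreasing in each argument, and satisfies $|Q(v)-Q(u)|\le\sum_i|v_i-u_i|$. The survival function of an $m$-variate quasi-copula $Q$ is $\widehat{Q}(u)=\sum_{J\subseteq\{1,\dots,m\}}(-1)^{m-|J|}Q(y^J)$, where $y^J_i=1$ if $i\in J$ and $y^J_i=u_i$ otherwise (so for $m=2$, $\widehat{Q}(u_1,u_2)=1-u_1-u_2+Q(u_1,u_2)$). *)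

(* Defs.v *)
From HB Require Import structures.
From mathcomp Require Import all_boot all_order all_algebra.
From mathcomp Require Import reals.
Set Implicit Arguments. Unset Strict Implicit. Unset Printing Implicit Defensive.
Import Order.TTheory GRing.Theory Num.Theory.
Local Open Scope ring_scope.

(* Points of [0,1]^m are functions 'I_m -> R; coordinate u_{i+1} is u i
   (0-based indexing: u_1 of the paper is u ord0). *)

Definition in_cube (R : realType) (m : nat) (u : 'I_m -> R) : Prop :=
  forall i, 0 <= u i <= 1.

Definition marg_pt (R : realType) (m : nat) (i : 'I_m) (x : R) : 'I_m -> R :=
  fun j => if j == i then x else 1.

(* An m-variate quasi-copula: a function on [0,1]^m (values outside the cube
   are irrelevant) satisfying the axioms on the cube. *)
Definition quasi_copula (R : realType) (m : nat) (Q : ('I_m -> R) -> R) : Prop :=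
  [/\ (forall u, in_cube u -> 0 <= Q u <= 1),
      (forall u, in_cube u -> (exists i, u i = 0) -> Q u = 0),
      (forall i x, 0 <= x <= 1 -> Q (marg_pt i x) = x),
      (forall u v, in_cube u -> in_cube v -> (forall i, u i <= v i) -> Q u <= Q v)
    & (forall u v, in_cube u -> in_cube v ->
         `|Q v - Q u| <= \sum_(i < m) `|v i - u i|)].

Definition yJ (R : realType) (m : nat) (J : {set 'I_m}) (u : 'I_m -> R) : 'I_m -> R :=
  fun i => if i \in J then 1 else u i.

Definition survival (R : realType) (m : nat) (Q : ('I_m -> R) -> R) (u : 'I_m -> R) : R :=
  \sum_(J : {set 'I_m}) (-1) ^+ (m - #|J|)%N * Q (yJ J u).

Definition pt2 (R : realType) (a b : R) : 'I_2 -> R :=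
  fun j => if j == ord0 then a else b.

(* min / max over the coordinates i >= 2 (paper indexing), i.e. all 0-based
   indices i <> 0.  For m >= 2 this index set is nonempty and all values lie in
   [0,1], so the neutral elements 1 (for min) and 0 (for max) are harmless. *)
Definition min_tail (R : realType) (m : nat) (u : 'I_m -> R) : R :=
  \big[Num.min/1]_(i : 'I_m | (i != 0 :> nat)) u i.
Definition max_tail (R : realType) (m : nat) (u : 'I_m -> R) : R :=
  \big[Num.max/0]_(i : 'I_m | (i != 0 :> nat)) u i.

(* u_1 of the paper (0-based index 0); default 0 if m = 0 (never used). *)
Definition first_coord (R : realType) (m : nat) (u : 'I_m -> R) : R :=
  match m return ('I_m -> R) -> R with
  | 0 => fun _ => 0
  | k.+1 => fun u => u ord0
  end u.

Definition Qstar (R : realType) (m : nat) (Q2 : ('I_2 -> R) -> R)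
  : ('I_m -> R) -> R :=
  fun u => Q2 (pt2 (min_tail u) (first_coord u)).

(* Main.v *)
Require Import Defs.
From HB Require Import structures.
From mathcomp Require Import all_boot all_order all_algebra.
From mathcomp Require Import reals.
Import Order.TTheory GRing.Theory Num.Theory.
Local Open Scope ring_scope.
From mathcomp Require Import lra.
From Stdlib Require Import FunctionalExtensionality.

Set Implicit Arguments. Unset Strict Implicit.
Section H.
Variable R : realType.

Lemma mt_bounds m (u : 'I_m -> R) : in_cube u -> 0 <= min_tail u <= 1.
Proof.
move=> hu; rewrite /min_tail; apply: (big_ind (fun x => 0 <= x <= 1)).
- by rewrite ler01 lexx.
- move=> x y /andP[x0 x1] /andP[y0 y1]; rewrite le_min ge_min x0 y0 x1 //.
- by move=> i _; apply: hu.
Qed.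

Lemma mt_le1 m (u : 'I_m -> R) : (forall i, u i <= 1) -> min_tail u <= 1.
Proof.
move=> hu; rewrite /min_tail; apply: (big_ind (fun x => x <= 1)) => //.
by move=> x y x1 y1; rewrite ge_min x1.
Qed.

Lemma mt_le m (u : 'I_m -> R) (i : 'I_m) : (i != 0 :> nat) -> min_tail u <= u i.
Proof. by move=> hi; rewrite /min_tail (bigD1 i) //= ge_min lexx. Qed.

Lemma mt_mono m (u v : 'I_m -> R) : (forall i, u i <= v i) -> min_tail u <= min_tail v.
Proof.
move=> h; rewrite /min_tail; apply: (big_ind2 (fun x y => x <= y)) => //.
by move=> ? ? ? ? ? ?; apply: le_min2.
Qed.

Lemma min_lip (x1 x2 y1 y2 : R) :
  `|Num.min x1 y1 - Num.min x2 y2| <= `|x1 - x2| + `|y1 - y2|.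
Proof.
have h1 := normr_ge0 (x1 - x2). have h2 := normr_ge0 (y1 - y2).
have h3 := ler_norm (x1 - x2). have h4 := ler_norm (y1 - y2).
have h5 : - (x1 - x2) <= `|x1 - x2| by rewrite -normrN ler_norm.
have h6 : - (y1 - y2) <= `|y1 - y2| by rewrite -normrN ler_norm.
case: (leP x1 y1) => a; case: (leP x2 y2) => b;
rewrite ?(min_l (ltW _)) ?min_l ?(min_r (ltW _)) ?min_r ?(ltW a) ?(ltW b) //;
rewrite ler_norml; apply/andP; split; lra.
Qed.

Lemma mt_lip m (u v : 'I_m -> R) :
  `|min_tail v - min_tail u| <= \sum_(i : 'I_m | (i != 0 :> nat)) `|v i - u i|.
Proof.
rewrite /min_tail.
apply: (big_ind3 (fun a b c => `|a - b| <= c)).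
- by rewrite subrr normr0.
- move=> a b c a' b' c' h h'; apply: le_trans (min_lip _ _ _ _) _; exact: lerD.
- by [].
Qed.

Lemma bigmin1 (I : finType) (P : pred I) (F : I -> R) :
  (forall i, P i -> F i = 1) -> \big[Num.min/1]_(i | P i) F i = 1.
Proof.
move=> h; apply: (big_ind (fun x => x = 1)) => //.
by move=> x y -> ->; rewrite minxx.
Qed.

Lemma mt_ones m : min_tail (fun _ : 'I_m => (1:R)) = 1.
Proof.
rewrite /min_tail; apply: (big_ind (fun x => x = 1)) => //.
by move=> x y -> ->; rewrite minxx.
Qed.

Lemma mt_marg m (i : 'I_m) (x : R) : (i != 0 :> nat) -> x <= 1 ->
  min_tail (marg_pt i x) = x.
Proof.
move=> hi hx; rewrite /min_tail (bigD1 i) //= /marg_pt eqxx bigmin1 ?min_l //.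
by move=> j /andP[_ /negbTE ->].
Qed.


Lemma neq0P n (i : 'I_n.+2) : (i != ord0) = (i != 0 :> nat).
Proof. by []. Qed.

Definition o1 : 'I_2 := @Ordinal 2 1 isT.

Lemma pt2_cube (a b : R) : 0 <= a <= 1 -> 0 <= b <= 1 -> in_cube (pt2 a b).
Proof. by move=> ha hb j; rewrite /pt2; case: (j == ord0). Qed.

Lemma pt2_marg0 (x : R) : pt2 x 1 = marg_pt ord0 x.
Proof.
apply: functional_extensionality => j.
by rewrite /pt2 /marg_pt; case: (j == ord0).
Qed.

Lemma pt2_marg1 (x : R) : pt2 1 x = marg_pt o1 x.
Proof.
apply: functional_extensionality => -[[|[|k]] hk] //.
Qed.

Lemma qstar_qc n (Q2 : ('I_2 -> R) -> R) :
  quasi_copula Q2 -> quasi_copula (Qstar (m:=n.+2) Q2).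
Proof.
case=> Qb Qg Qm Qmon Qlip.
have cube : forall u : 'I_n.+2 -> R, in_cube u ->
  in_cube (pt2 (min_tail u) (u ord0)).
  by move=> u hu; apply: pt2_cube; [exact: mt_bounds | exact: hu].
rewrite /Qstar /first_coord /=.
split.
- by move=> u hu; apply: Qb; apply: cube.
- move=> u hu [i ui]; apply: Qg; first exact: cube.
  case: (eqVneq i ord0) => [ei|ni].
  + by exists o1; rewrite /pt2 /= -ui ei.
  + exists ord0; rewrite /pt2 eqxx; case/andP: (mt_bounds hu) => h0 _.
    have h1 := mt_le u (i:=i) ni; rewrite ui in h1.
    by apply/eqP; rewrite eq_le h1 h0.
- move=> i x hx; case: (eqVneq i ord0) => [->|ni].
  + have -> : min_tail (marg_pt (ord0 : 'I_n.+2) x) = 1.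
      rewrite /min_tail bigmin1 // => j hj; rewrite /marg_pt.
      by move: hj; rewrite -neq0P => /negbTE ->.
    by rewrite {1}/marg_pt eqxx pt2_marg1 Qm.
  + case/andP: (hx) => _ hx1.
    rewrite mt_marg -?neq0P // {1}/marg_pt eq_sym (negbTE ni).
    by rewrite pt2_marg0 Qm.
- move=> u v hu hv h; apply: Qmon; try exact: cube.
  by move=> j; rewrite /pt2; case: (j == ord0); [exact: mt_mono | exact: h].
- move=> u v hu hv; apply: le_trans (Qlip _ _ (cube u hu) (cube v hv)) _.
  rewrite big_ord_recl big_ord1 /pt2 /=.
  rewrite [X in _ <= X](bigD1 ord0) //= addrC lerD2r.
  by apply: le_trans (mt_lip u v) _; rewrite le_eqVlt; apply/orP; left;
     apply/eqP; apply: eq_bigl.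
Qed.


Lemma bigmin_le (I : finType) (P : pred I) (F : I -> R) i :
  P i -> \big[Num.min/1]_(j | P j) F j <= F i.
Proof. by move=> hi; rewrite (bigD1 i) //= ge_min lexx. Qed.

Lemma bigmin_le1 (I : finType) (P : pred I) (F : I -> R) :
  \big[Num.min/1]_(j | P j) F j <= 1.
Proof.
by elim/big_rec: _ => // i x _ hx; rewrite ge_min hx orbT.
Qed.


Lemma sum_split (T : finType) (k : T) (F : {set T} -> R) :
  \sum_(J : {set T}) F J = \sum_(J : {set T} | k \notin J) (F J + F (k |: J)).
Proof.
rewrite (bigID (fun J : {set T} => k \in J)) /= addrC big_split /=; congr (_ + _).
rewrite (reindex_onto (fun J : {set T} => k |: J) (fun J : {set T} => J :\ k)) /=; last first.
  by move=> J hJ; rewrite setD1K.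
apply: eq_bigl => J; rewrite setU11 /=.
case hk: (k \in J) => /=.
  by apply/negbTE/eqP => e; move: hk; rewrite -e setD11.
by rewrite setU1K ?hk ?eqxx.
Qed.

Lemma max_tail_arg n (u : 'I_n.+2 -> R) : in_cube u ->
  exists k : 'I_n.+2, [/\ k != ord0, max_tail u = u k &
     forall i, i != ord0 -> u i <= u k].
Proof.
move=> hu.
have le : forall i, i != ord0 -> u i <= max_tail u.
  by move=> i hi; rewrite /max_tail (bigD1 i) -?neq0P //= le_max lexx.
have : max_tail u = 0 \/ exists k, k != ord0 /\ max_tail u = u k.
  rewrite /max_tail; apply: (big_ind (fun x => x = 0 \/ exists k, k != ord0 /\ x = u k)).
  - by left.
  - by move=> x y hx hy; case: (leP x y).
  - by move=> i hi; right; exists i; split => //; rewrite neq0P.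
case => [M0|[k [nk Mk]]].
  pose k1 : 'I_n.+2 := @Ordinal n.+2 1 isT.
  have nk1 : k1 != ord0 by [].
  have e : u k1 = 0.
    apply/eqP; rewrite eq_le; case/andP: (hu k1) => -> _.
    by rewrite -M0 le.
  exists k1; split => //; first by rewrite e.
  by move=> i hi; rewrite e -M0 le.
by exists k; split => // i hi; rewrite -Mk le.
Qed.

Lemma I2_cases (x : 'I_2) : x = ord0 \/ x = o1.
Proof.
case: x => [[|[|i]] hx]; first by left; apply/val_inj.
  by right; apply/val_inj.
by [].
Qed.

Lemma yJ0 (a b : R) : yJ set0 (pt2 a b) = pt2 a b.
Proof. by apply: functional_extensionality => j; rewrite /yJ inE. Qed.

Lemma yJ1 (a b : R) : yJ [set o1] (pt2 a b) = pt2 a 1.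
Proof.
by apply: functional_extensionality => j; case: (I2_cases j) => ->; rewrite /yJ inE.
Qed.

Lemma yJ2 (a b : R) : yJ [set ord0] (pt2 a b) = pt2 1 b.
Proof.
by apply: functional_extensionality => j; case: (I2_cases j) => ->; rewrite /yJ inE.
Qed.

Lemma yJ3 (a b : R) : yJ (o1 |: [set ord0]) (pt2 a b) = pt2 1 1.
Proof.
by apply: functional_extensionality => j; case: (I2_cases j) => ->; rewrite /yJ !inE.
Qed.


Lemma surv n (Q2 : ('I_2 -> R) -> R) (u : 'I_n.+2 -> R) : in_cube u ->
  survival (Qstar (m:=n.+2) Q2) u = survival Q2 (pt2 (max_tail u) (first_coord u)).
Proof.
move=> hu; have [k [nk Mk hk]] := max_tail_arg hu.
rewrite Mk /survival /Qstar /first_coord /= (sum_split k).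
pose A1 : {set 'I_n.+2} := setT :\ k.
pose A0 : {set 'I_n.+2} := A1 :\ ord0.
have kA1 : k \notin A1 by rewrite !inE eqxx.
have kA0 : k \notin A0 by rewrite !inE eqxx andbF.
have oA1 : ord0 \in A1 by rewrite !inE eq_sym nk.
have A01 : A0 != A1 by apply/eqP => e; move: oA1; rewrite -e !inE eqxx.
have cA1 : #|A1| = n.+1.
  by move/eqP: (cardsD1 k setT); rewrite cardsT card_ord in_setT add1n eqSS => /eqP <-.
have cA0 : #|A0| = n.
  by move/eqP: (cardsD1 ord0 A1); rewrite cA1 oA1 add1n eqSS => /eqP <-.
set X1 := Q2 (pt2 (u k) 1). set X2 := Q2 (pt2 1 1).
set X3 := Q2 (pt2 (u k) (u ord0)). set X4 := Q2 (pt2 1 (u ord0)).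
have claim : forall J : {set 'I_n.+2}, k \notin J ->
  (-1) ^+ (n.+2 - #|J|) * Q2 (pt2 (min_tail (yJ J u)) (yJ J u ord0)) +
  (-1) ^+ (n.+2 - #|k |: J|) * Q2 (pt2 (min_tail (yJ (k |: J) u)) (yJ (k |: J) u ord0))
  = if J == A1 then - (X1 - X2) else if J == A0 then X3 - X4 else 0.
  move=> J hkJ.
  have cJ : (#|J| < n.+2)%N.
    have : J \proper setT by rewrite properT; apply: contraNneq hkJ => ->; rewrite inE.
    by move/proper_card; rewrite cardsT card_ord.
  rewrite cardsU1 hkJ add1n -(subnSK cJ) exprS mulN1r.
  have fc : yJ (k |: J) u ord0 = yJ J u ord0.
    by rewrite /yJ in_setU1 eq_sym (negbTE nk).
  rewrite fc.
  set r := \big[Num.min/1]_(j : 'I_n.+2 | (j != 0 :> nat) && (j != k)) yJ J u j.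
  have mJ : min_tail (yJ J u) = Num.min (u k) r.
    by rewrite /min_tail (bigD1 k) -?neq0P //= {1}/yJ (negbTE hkJ).
  have mkJ : min_tail (yJ (k |: J) u) = r.
    rewrite /min_tail (bigD1 k) -?neq0P //= {1}/yJ setU11 min_r ?bigmin_le1 //.
    by rewrite /r; apply: eq_bigr => j /andP[_ jk]; rewrite /yJ in_setU1 (negbTE jk).
  rewrite mJ mkJ.
  set s := (-1) ^+ (n.+2 - #|J|.+1).
  case: (eqVneq J A1) => [eJ|nA1].
    have r1 : r = 1.
      by rewrite /r bigmin1 // => j /andP[_ jk]; rewrite /yJ eJ !inE jk.
    rewrite r1 min_l; last by case/andP: (hu k).
    have -> : yJ J u ord0 = 1 by rewrite /yJ eJ oA1.
    rewrite /s eJ cA1 subnn expr0 -/X1 -/X2; lra.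
  case: (eqVneq J A0) => [eJ|nA0].
    have r1 : r = 1.
      rewrite /r bigmin1 // => j /andP[j0 jk]; rewrite /yJ eJ !inE jk.
      by have -> : j != ord0 by rewrite neq0P.
    rewrite r1 min_l; last by case/andP: (hu k).
    have -> : yJ J u ord0 = u ord0 by rewrite /yJ eJ !inE eqxx.
    rewrite /s eJ cA0 subSS subSnn expr1 -/X3 -/X4; lra.

  case: (boolP [exists i, [&& i != ord0, i != k & i \notin J]]).
    move=> /existsP [i /and3P[i0 ik iJ]].
    have ri : r <= u i.
      have : r <= yJ J u i by apply: bigmin_le; rewrite -neq0P i0 ik.
      by rewrite /yJ (negbTE iJ).
    rewrite min_r; last exact: le_trans ri (hk i i0).
    by rewrite mulNr addNr.
  rewrite negb_exists => /forallP h; exfalso.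
  case oJ: (ord0 \in J).
    move/eqP: nA1; apply; apply/setP => x; rewrite !inE ?andbT.
    case: (eqVneq x k) => [->|xk] /=; first by rewrite (negbTE hkJ).
    case: (eqVneq x ord0) => [->|x0]; first by rewrite oJ.
    by move: (h x); rewrite x0 xk /= negbK.
  move/eqP: nA0; apply; apply/setP => x; rewrite !inE ?andbT.
  case: (eqVneq x k) => [->|xk] /=; first by rewrite (negbTE hkJ) andbF.
  case: (eqVneq x ord0) => [->|x0]; first by rewrite oJ.
  by move: (h x); rewrite x0 xk /= negbK.
rewrite (eq_bigr _ claim) (bigD1 A1) //= (bigD1 A0) /=; last by rewrite kA0 A01.
rewrite big1; last first.
  by move=> J /andP[/andP[_ h1] h2]; rewrite (negbTE h1) (negbTE h2).
rewrite eqxx (negbTE A01) eqxx addr0.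
rewrite (sum_split o1) (bigD1 set0) ?inE //= (bigD1 [set ord0]) /=; last first.
  by rewrite !inE; apply/andP; split => //; apply/eqP => /setP /(_ ord0); rewrite !inE.
rewrite big1; last first.
  move=> J /andP[/andP[o1J h1] h2]; exfalso.
  case oJ: (ord0 \in J).
    move/eqP: h2; apply; apply/setP => x; rewrite !inE.
    by case: (I2_cases x) => ->; rewrite ?oJ ?(negbTE o1J).
  move/eqP: h1; apply; apply/setP => x; rewrite !inE.
  by case: (I2_cases x) => ->; rewrite ?oJ ?(negbTE o1J).
rewrite setU0 yJ0 yJ1 yJ2 yJ3 cards0 cards1 cardsU1 !inE cards1 /=.
rewrite -/X3 -/X4 -/X1 -/X2 addr0.
rewrite (_ : (2-0 = 2)%N) // (_ : (2-1 = 1)%N) // (_ : (2-(1+1) = 0)%N) //.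
rewrite !exprS !expr0; lra.
Qed.

End H.

Theorem mainTheorem3 (R : realType) (m : nat) (Q2 : ('I_2 -> R) -> R) :
  (2 <= m)%N ->
  quasi_copula Q2 ->
  quasi_copula (Qstar (m:=m) Q2) /\
  (forall u : 'I_m -> R, in_cube u ->
     survival (Qstar (m:=m) Q2) u =
     survival Q2 (pt2 (max_tail u) (first_coord u))).
Proof.
case: m => [|[|n]] // _ hQ.
split; first exact: qstar_qc.
by move=> u hu; apply: surv.
Qed.
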